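(* Let $\mathcal{L}$ be a finite bounded distributive lattice and let $\mathcal{A}$ be an $\mathcal{L}$-$\mathcal{VL}$-algebra. Let $X=\mathrm{Hom}_{\mathcal{VA}_{\mathcal{L}}}(\mathcal{A},\mathcal{L})$ and, for $a\in\mathcal{A}$, let $\langle a\rangle=\{v\in X: v(a)=1\}$. Let $\sigma_1$ be the topology on $X$ generated by the basis $B^{\sigma_1}=\{\langle a\rangle : a\in\mathcal{A}\}$ and $\sigma_2$ the topology generated by the basis $B^{\sigma_2}=\{X\setminus O: O\in B^{\sigma_1}\}$. Then $(X,\sigma_1,\sigma_2)$ is a pairwise Boolean space.
   Context: $\mathcal{L}$ is a finite bounded distributive lattice, hence a Heyting algebra. An $\mathcal{L}$-$\mathcal{VL}$-algebra is a structure $(\mathcal{A},\wedge,\vee,\to,(T_\ell)_{\ell\in\mathcal{L}},0,1)$, with unary operations $T_\ell$, such that for all $\ell,\ell_1,\ell_2\in\mathcal{L}$ and $a,b\in\mathcal{A}$: (i) $(\mathcal{A},\wedge,\vee,\to,0,1)$ is a Heyting algebra; (ii) $T_{\ell_1}(a)\wedge T_{\ell_2}(b)\le T_{\ell_1\to\ell_2}(a\to b)\wedge T_{\ell_1\wedge\ell_2}(a\wedge b)\wedge T_{\ell_1\vee\ell_2}(a\vee b)$ and $T_{\ell_2}(a)\le T_{T_{\ell_1}(\ell_2)}(T_{\ell_1}(a))$; (iii) $T_0(0)=1$, $T_\ell(0)=0$ for $\ell\neq0$, $T_1(1)=1$, $T_\ell(1)=0$ for $\ell\ne1$; (iv) $\bigvee_{\ell\in\mathcal{L}}T_\ell(a)=1$,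 $T_\ell(a)\vee(T_\ell(a)\to0)=1$, and $T_{\ell_1}(a)\wedge T_{\ell_2}(a)=0$ for $\ell_1\ne\ell_2$; (v) $T_1(T_\ell(a))=T_\ell(a)$, $T_0(T_\ell(a))=T_\ell(a)\to0$, $T_{\ell_2}(T_{\ell_1}(a))=0$ for $\ell_2\neq0,1$; (vi) $T_1(a)\le a$, $T_1(a\wedge b)=T_1(a)\wedge T_1(b)$; (vii) $\bigwedge_{\ell\in\mathcal{L}}(T_\ell(a)\leftrightarrow T_\ell(b))\le(a\leftrightarrow b)$. $\mathcal{L}$ itself is regarded as an $\mathcal{L}$-$\mathcal{VL}$-algebra with its Heyting operations and $T_\ell(x)=1$ if $x=\ell$, $T_\ell(x)=0$ otherwise. $\mathcal{VA}_{\mathcal{L}}$ is the category of $\mathcal{L}$-$\mathcal{VL}$-algebras and homomorphisms preserving all operations. A bitopological space $(S,\tau_1,\tau_2)$ is: pairwise Hausdorff if for distinct $s_1,s_2$ there are disjoint $O_1\in\tau_1$, $O_2\in\tau_2$ with $s_1\in O_1$, $s_2\in O_2$; pairwise zero-dimensional if the sets that are $\tau_1$-open and $\tau_2$-closed form a basis of $\tau_1$ and the sets that are $\tau_2$-open and $\tau_1$-closed form a basis of $\tau_2$; pairwise compact if every cover of $S$ by sets in $\tau_1\cup\tau_2$ has a finite subcover. A pairwise Boolean space is one that is pairwise Hausdorff, pairwise zero-dimensional and pairwise compact. *)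

(* Defs.v *)
From HB Require Import structures.
From mathcomp Require Import all_boot all_order.
Set Implicit Arguments. Unset Strict Implicit. Unset Printing Implicit Defensive.
Import Order.TTheory.
Local Open Scope order_scope.

Section VL.
Variables (dL : Order.disp_t) (L : finTBDistrLatticeType dL).

Definition impL (x y : L) : L := \join_(z : L | z `&` x <= y) z.

Definition TL (l x : L) : L := if x == l then \top else \bot.

Variables (d : Order.disp_t) (A : tbDistrLatticeType d).
Variables (impA : A -> A -> A) (T : L -> A -> A).

Definition iffA (a b : A) : A := impA a b `&` impA b a.

Definition is_VL_algebra : Prop :=
  (* (i) Heyting algebra: impA is the relative pseudocomplement *)
  (forall a b c : A, (c <= impA a b) = (c `&` a <= b)) /\
  (forall (l1 l2 : L) (a b : A),
      T l1 a `&` T l2 b <=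
        T (impL l1 l2) (impA a b) `&` T (l1 `&` l2) (a `&` b) `&` T (l1 `|` l2) (a `|` b)) /\
  (forall (l1 l2 : L) (a : A), T l2 a <= T (TL l1 l2) (T l1 a)) /\
  T \bot \bot = \top /\ (forall l : L, l != \bot -> T l \bot = \bot) /\
  T \top \top = \top /\ (forall l : L, l != \top -> T l \top = \bot) /\
  (forall a : A, \join_(l : L) T l a = \top) /\
  (forall (l : L) (a : A), T l a `|` impA (T l a) \bot = \top) /\
  (forall (l1 l2 : L) (a : A), l1 != l2 -> T l1 a `&` T l2 a = \bot) /\
  (forall (l : L) (a : A), T \top (T l a) = T l a) /\
  (forall (l : L) (a : A), T \bot (T l a) = impA (T l a) \bot) /\
  (forall (l1 l2 : L) (a : A), l2 != \bot -> l2 != \top -> T l2 (T l1 a) = \bot) /\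
  (forall a : A, T \top a <= a) /\
  (forall a b : A, T \top (a `&` b) = T \top a `&` T \top b) /\
  (forall a b : A, \meet_(l : L) iffA (T l a) (T l b) <= iffA a b).

Definition is_VL_hom (v : A -> L) : Prop :=
  (forall a b, v (a `&` b) = v a `&` v b) /\
  (forall a b, v (a `|` b) = v a `|` v b) /\
  (forall a b, v (impA a b) = impL (v a) (v b)) /\
  (forall l a, v (T l a) = TL l (v a)) /\
  v \bot = \bot /\ v \top = \top.

Definition HomAL : Type := {v : A -> L | is_VL_hom v}.

Definition basic_open (a : A) : HomAL -> Prop := fun v => proj1_sig v a = \top.

End VL.

Section Topo.
Variable S : Type.

Inductive gen_open (B : (S -> Prop) -> Prop) : (S -> Prop) -> Prop :=
| go_basic U : B U -> gen_open B U
| go_full : gen_open B (fun _ => True)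
| go_inter U V : gen_open B U -> gen_open B V -> gen_open B (fun x => U x /\ V x)
| go_union (F : (S -> Prop) -> Prop) :
    (forall U, F U -> gen_open B U) -> gen_open B (fun x => exists U, F U /\ U x)
| go_ext U V : gen_open B U -> (forall x, U x <-> V x) -> gen_open B V.

Variables (tau1 tau2 : (S -> Prop) -> Prop).

Definition closed_in (tau : (S -> Prop) -> Prop) (F : S -> Prop) : Prop :=
  tau (fun x => ~ F x).

Definition pairwise_Hausdorff : Prop :=
  forall s1 s2 : S, s1 <> s2 ->
    exists O1 O2, tau1 O1 /\ tau2 O2 /\ O1 s1 /\ O2 s2 /\ (forall x, ~ (O1 x /\ O2 x)).

Definition clopen_basis (taui tauj : (S -> Prop) -> Prop) : Prop :=
  forall (U : S -> Prop) (x : S), taui U -> U x ->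
    exists W, taui W /\ closed_in tauj W /\ W x /\ (forall y, W y -> U y).

Definition pairwise_zero_dimensional : Prop :=
  clopen_basis tau1 tau2 /\ clopen_basis tau2 tau1.

Definition pairwise_compact : Prop :=
  forall C : (S -> Prop) -> Prop,
    (forall U, C U -> tau1 U \/ tau2 U) ->
    (forall x, exists U, C U /\ U x) ->
    exists (n : nat) (f : 'I_n -> (S -> Prop)),
      (forall i, C (f i)) /\ (forall x, exists i, f i x).

Definition pairwise_Boolean : Prop :=
  pairwise_Hausdorff /\ pairwise_zero_dimensional /\ pairwise_compact.

End Topo.

Arguments basic_open [dL L d A] impA T a _.
Arguments is_VL_algebra [dL L d A] impA T.
Arguments is_VL_hom [dL L d A] impA T v.

Definition sigma1 dL (L : finTBDistrLatticeType dL) d (A : tbDistrLatticeType d)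
  (impA : A -> A -> A) (T : L -> A -> A) : (HomAL impA T -> Prop) -> Prop :=
  gen_open (fun U => exists a : A, U = basic_open impA T a).

Definition sigma2 dL (L : finTBDistrLatticeType dL) d (A : tbDistrLatticeType d)
  (impA : A -> A -> A) (T : L -> A -> A) : (HomAL impA T -> Prop) -> Prop :=
  gen_open (fun U => exists a : A, U = (fun v => ~ basic_open impA T a v)).
Arguments sigma1 [dL L d A] impA T _.
Arguments sigma2 [dL L d A] impA T _.

(* Main.v *)
Require Import Defs.
From HB Require Import structures.
From mathcomp Require Import all_boot all_order.
From mathcomp Require Import all_classical topology_structure compact discrete_topology function_spaces product_topology.
From mathcomp Require Import finmap.
Import ArrowAsProduct.
From Stdlib Require Import Classical.
Set Implicit Arguments. Unset Strict Implicit. Unset Printing Implicit Defensive.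

Section Gen.
Variable S : Type.
Local Open Scope classical_set_scope.

Lemma go_empty (B : (S -> Prop) -> Prop) : gen_open B (fun _ => False).
Proof.
apply: (go_ext (@go_union _ B (fun _ => False) (fun U (h : False) => match h with end))).
by move=> x; split=> [[U [[]]]|[]].
Qed.

Lemma go_cup2 (B : (S -> Prop) -> Prop) U V : gen_open B U -> gen_open B V ->
  gen_open B (fun x => U x \/ V x).
Proof.
move=> hU hV.
have hF : forall W, (fun W => W = U \/ W = V) W -> gen_open B W by move=> W [->|->].
apply: (go_ext (go_union hF)).
move=> x; split=> [[W [[->|->] h]]|[h|h]]; [left|right|exists U|exists V]; auto.
Qed.

Lemma zd_gen (B1 B2 : (S -> Prop) -> Prop) :
  (forall U, B1 U -> gen_open B2 (fun x => ~ U x)) ->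
  clopen_basis (gen_open B1) (gen_open B2).
Proof.
move=> hB U x hU; move: x; elim: hU.
- move=> V BV x Vx; exists V; split; first exact: go_basic.
  by split; [exact: hB|split].
- move=> x _; exists (fun _ => True); split; first exact: go_full.
  split=> //; rewrite /closed_in.
  by apply: (go_ext (go_empty B2)) => y; split=> // [[]].
- move=> V W _ IV _ IW x [Vx Wx].
  have [V' [oV' [cV' [V'x sV']]]] := IV x Vx.
  have [W' [oW' [cW' [W'x sW']]]] := IW x Wx.
  exists (fun y => V' y /\ W' y); split; first exact: go_inter.
  split; last by split=> // y [/sV' ? /sW' ?].
  apply: (go_ext (go_cup2 cV' cW')) => y; split.
    by move=> [h [? ?]|h [? ?]]; apply: h.
  by move=> h; apply: NNPP => h'; apply: h; split; apply: NNPP => h2; apply: h'; [left|right].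
- move=> F _ IF x [V [FV Vx]].
  have [W [oW [cW [Wx sW]]]] := IF V FV x Vx.
  by exists W; do 3 split => //; move=> y /sW Vy; exists V.
- move=> V W _ IV e x /e Vx.
  have [W' [oW' [cW' [Wx sW]]]] := IV x Vx.
  by exists W'; do 3 split => //; move=> y /sW /e.
Qed.

Variables (P : ptopologicalType) (e : S -> P).

Definition rep_prop (tau : (S -> Prop) -> Prop) :=
  forall U, tau U -> forall s, U s ->
    exists O : set P, open O /\ O (e s) /\ forall y, O (e y) -> U y.

Lemma rep_gen (B : (S -> Prop) -> Prop) :
  (forall U, B U -> forall s, U s ->
    exists O : set P, open O /\ O (e s) /\ forall y, O (e y) -> U y) ->
  rep_prop (gen_open B).
Proof.
move=> hB U hU; elim: hU.
- exact: hB.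
- by move=> s _; exists setT; split; [exact: openT|split].
- move=> V W _ IV _ IW s [Vs Ws].
  have [O1 [o1 [s1 h1]]] := IV s Vs; have [O2 [o2 [s2 h2]]] := IW s Ws.
  exists (O1 `&` O2)%classic; split; first exact: openI.
  by split=> // y [/h1 ? /h2 ?].
- move=> F _ IF s [V [FV Vs]].
  have [O [o [sO h]]] := IF V FV s Vs.
  by exists O; do 2 split => //; move=> y /h ?; exists V.
- move=> V W _ IV eq s /eq Vs.
  have [O [o [sO h]]] := IV s Vs.
  by exists O; do 2 split => //; move=> y /h /eq.
Qed.

Lemma pc_gen (K : set P) (tau1 tau2 : (S -> Prop) -> Prop) :
  compact K -> (forall p, K p -> exists s, e s = p) -> (forall s, K (e s)) ->
  rep_prop tau1 -> rep_prop tau2 -> pairwise_compact tau1 tau2.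
Proof.
move=> cK sK Ke r1 r2 C hC covC.
pose Rep (U : set S) : set P :=
  \bigcup_(O in [set O : set P | open O /\ forall y, O (e y) -> U y]) O.
have hc : cover_compact K by move: cK; rewrite (@compact_cover P).
have [] := hc _ C Rep.
- by move=> U _; apply: bigcup_open => O [].
- move=> p /sK [s <-]; have [U [CU Us]] := covC s.
  exists U => //.
  have [O [oO [Os h]]] : exists O : set P, open O /\ O (e s) /\ forall y, O (e y) -> U y.
    by case: (hC U CU) => h; [exact: r1|exact: r2].
  by exists O.
move=> D' sD' cD'.
exists (size D'), (fun i : 'I_(size D') => nth set0 D' i); split.
  move=> i; have := sD' (nth set0 D' i); rewrite in_setE; apply; exact: mem_nth.
move=> x; have [U DU [O [_ hO] Ox]] := cD' _ (Ke x).
have iU : index U D' < size D' by rewrite index_mem.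
by exists (Ordinal iU) => /=; rewrite nth_index //; apply: hO.
Qed.

End Gen.

Section Spec.
Variables (dL : Order.disp_t) (L : finTBDistrLatticeType dL)
  (d : Order.disp_t) (A : tbDistrLatticeType d)
  (impA : A -> A -> A) (T : L -> A -> A).

Local Open Scope classical_set_scope.
Definition Lp : Type := L.
HB.instance Definition _ := Choice.on Lp.
HB.instance Definition _ := isPointed.Build Lp (\bot : L)%O.
Definition Ld := discrete_topology Lp.
HB.instance Definition _ := Pointed.on Ld.
HB.instance Definition _ := Topological.on Ld.

Definition PP := forall a : A, Ld.
HB.instance Definition _ := Pointed.on PP.
HB.instance Definition _ := Topological.on PP.

Definition eX (x : HomAL impA T) : PP := proj1_sig x.
Definition KK : set PP := fun f => is_VL_hom impA T f.

Lemma open_coord (a : A) (Q : set Ld) : open (fun f : PP => Q (f a)).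
Proof.
have := @open_comp PP Ld (proj a) Q.
apply.
- by move=> x _; apply: proj_continuous.
- exact: discrete_open.
Qed.

Lemma open_local (D : set PP) :
  (forall x, D x -> exists O : set PP, open O /\ O x /\ (forall y, O y -> D y)) -> open D.
Proof.
move=> h.
have -> : D = \bigcup_(O in [set O : set PP | open O /\ (forall y, O y -> D y)]) O.
  apply/seteqP; split=> x.
    by move=> /h [O [oO [Ox sO]]]; exists O.
  by move=> [O [_ sO] Ox]; apply: sO.
by apply: bigcup_open => O [].
Qed.

Local Open Scope order_scope.

Lemma K_of_approx (f : PP) :
  (forall x y z : A, exists g : PP, g x = f x /\ g y = f y /\ g z = f z /\ KK g) -> KK f.
Proof.
move=> h; split; [|split; [|split; [|split; [|split]]]].
- move=> a b; have [g [e1 [e2 [e3 [hm _]]]]] := h (a `&` b) a b.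
  by rewrite -e1 -e2 -e3 hm.
- move=> a b; have [g [e1 [e2 [e3 [_ [hj _]]]]]] := h (a `|` b) a b.
  by rewrite -e1 -e2 -e3 hj.
- move=> a b; have [g [e1 [e2 [e3 [_ [_ [hi _]]]]]]] := h (impA a b) a b.
  by rewrite -e1 -e2 -e3 hi.
- move=> l a; have [g [e1 [e2 [e3 [_ [_ [_ [hT _]]]]]]]] := h (T l a) a a.
  by rewrite -e1 -e2 hT.
- have [g [e1 [e2 [e3 [_ [_ [_ [_ [h0 _]]]]]]]]] := h \bot \bot \bot.
  by rewrite -e1 h0.
- have [g [e1 [e2 [e3 [_ [_ [_ [_ [_ h1]]]]]]]]] := h \top \top \top.
  by rewrite -e1 h1.
Qed.

Lemma closed_K : closed KK.
Proof.
suff : open (~` KK)%classic.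
  by rewrite -closedC setCK.
apply: open_local => f nKf.
have [x [y [z hn]]] : exists x y z : A, forall g : PP,
    ~ (g x = f x /\ g y = f y /\ g z = f z /\ KK g).
  apply: NNPP => hc; apply: nKf; apply: K_of_approx => x y z.
  apply: NNPP => hc2; apply: hc; exists x, y, z => g hg; apply: hc2; by exists g.
exists (fun g : PP => g x = f x /\ g y = f y /\ g z = f z); split.
  apply: openI; first exact: (open_coord x (fun t => t = f x)).
  apply: openI; first exact: (open_coord y (fun t => t = f y)).
  exact: (open_coord z (fun t => t = f z)).
split=> // g [e1 [e2 e3]] Kg.
exact: (hn g (conj e1 (conj e2 (conj e3 Kg)))).
Qed.

Lemma compact_K : compact KK.
Proof.
apply: (@subclosed_compact PP KK setT closed_K) => //.
have hc : compact [set f : forall i : A, Ld | forall i, [set: Ld] (f i)].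
  apply: (@tychonoff A (fun _ => Ld) (fun _ => setT)) => i.
  exact: (@finite_compact Ld setT (@finite_finset L setT)).
have -> : [set: PP] = [set f : forall i : A, Ld | forall i, [set: Ld] (f i)].
  by apply/seteqP; split.
exact: hc.
Qed.

End Spec.

Local Open Scope order_scope.
Import Order.TTheory.

Lemma hom_ext dL (L : finTBDistrLatticeType dL) d (A : tbDistrLatticeType d)
  (impA : A -> A -> A) (T : L -> A -> A) (s1 s2 : HomAL impA T) :
  (forall a, proj1_sig s1 a = proj1_sig s2 a) -> s1 = s2.
Proof.
case: s1 s2 => [f1 h1] [f2 h2] /= e.
have ef := functional_extensionality_dep e.
subst f2; congr exist; exact: Prop_irrelevance.
Qed.

Theorem lemma1 (dL : Order.disp_t) (L : finTBDistrLatticeType dL)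
  (d : Order.disp_t) (A : tbDistrLatticeType d)
  (impA : A -> A -> A) (T : L -> A -> A)
  (HA : is_VL_algebra impA T) :
  pairwise_Boolean (sigma1 impA T) (sigma2 impA T).
Proof.
split; [|split; [split|]].
- move=> s1 s2 ne.
  have [a na] : exists a, proj1_sig s1 a <> proj1_sig s2 a.
    apply: NNPP => hc; apply: ne; apply: hom_ext => a.
    by apply: NNPP => hn; apply: hc; exists a.
  set l := proj1_sig s1 a.
  have [_ [_ [_ [hT1 _]]]] := proj2_sig s1.
  have [_ [_ [_ [hT2 _]]]] := proj2_sig s2.
  exists (basic_open impA T (T l a)), (fun v => ~ basic_open impA T (T l a) v).
  split; first by apply: go_basic; exists (T l a).
  split; first by apply: go_basic; exists (T l a).
  split; first by rewrite /basic_open hT1 /TL eqxx.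
  split; last by move=> x [].
  rewrite /basic_open hT2 /TL.
  have -> : (proj1_sig s2 a == l) = false by apply/eqP => h; apply: na; exact: (esym h).
  move=> hbt; apply: na.
  have ht : forall x : L, x = \top by move=> x; apply/eqP; rewrite eq_le lex1 -hbt le0x.
  by rewrite [LHS]ht [RHS]ht.
- apply: zd_gen => U [a ->]; apply: go_basic; by exists a.
- apply: zd_gen => U [a ->].
  apply: (go_ext (go_basic (ex_intro (fun b => basic_open impA T a = basic_open impA T b) a erefl))).
  by move=> x; split=> [h hn|/NNPP //]; apply: hn.
- apply: (@pc_gen _ _ (@eX _ L _ A impA T) (@KK _ L _ A impA T)).
  + exact: compact_K.
  + by move=> p Kp; exists (exist _ p Kp).
  + by move=> s; exact: (proj2_sig s).
  + apply: rep_gen => U [a ->] s hs.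
    exists (fun f : PP L A => f a = \top); split; first exact: (open_coord a (fun t => t = \top)).
    by split.
  + apply: rep_gen => U [a ->] s hs.
    exists (fun f : PP L A => f a <> \top); split; first exact: (open_coord a (fun t => t <> \top)).
    by split.
Qed.
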